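(* Let $\omega:\Gamma^2\to\Gamma$ be a group morphism and define $\widetilde\omega:\Gamma^2\to\Gamma$ by $\widetilde\omega(g,h):=\omega(h,g)$. Then $G(\widetilde\omega)\cong G(\omega)$.
   Context: $\{0,1\}^*$ denotes the finite words over $\{0,1\}$; $\mathfrak C=\{0,1\}^{\mathbb N}$. A finite complete prefix code is a finite set $\{t_1,\dots,t_n\}\subset\{0,1\}^*$ such that every $x\in\mathfrak C$ has exactly one $t_i$ as prefix. Thompson's group $V$ is the group of homeomorphisms $v$ of $\mathfrak C$ for which there exist finite complete prefix codes $\{t_i\},\{s_i\}$ and a permutation $\sigma$ with $v(t_iw)=s_{\sigma(i)}w$. For a group morphism $\omega:\Gamma^2\to\Gamma$, $K(\omega)$ is the group of maps $a:\{0,1\}^*\to\Gamma$ (pointwise product) with $a(u)=\omega(a(u0),a(u1))$ for all $u$; $V$ acts on it by $\pi(v)(a)(s_{\sigma(i)}u)=a(t_iu)$ for all $i$, $u$ (determining $\pi(v)(a)\in K(\omega)$ uniquely); $G(\omega):=K(\omega)\rtimes V$ with $vav^{-1}=\pi(v)(a)$. *)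

(* Defs.v *)
From Stdlib Require Import List Arith ClassicalEpsilon.
Import ListNotations.

Record group := Group {
  gcar :> Type;
  gmul : gcar -> gcar -> gcar;
  gone : gcar;
  ginv : gcar -> gcar;
  gmulA : forall x y z, gmul x (gmul y z) = gmul (gmul x y) z;
  gmul1l : forall x, gmul gone x = x;
  gmul1r : forall x, gmul x gone = x;
  gmulVl : forall x, gmul (ginv x) x = gone;
  gmulVr : forall x, gmul x (ginv x) = gone
}.

Definition is_morph2 (G : group) (om : G -> G -> G) : Prop :=
  forall g g' h h', om (gmul G g g') (gmul G h h') = gmul G (om g h) (om g' h').

(* finite words over {0,1} (false = 0, true = 1) and the Cantor space *)
Definition word := list bool.
Definition cantor := nat -> bool.

Definition catw (t : word) (w : cantor) : cantor :=
  fun k => if k <? length t then nth k t false else w (k - length t).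

Definition is_prefix (t : word) (x : cantor) : Prop :=
  forall k, k < length t -> x k = nth k t false.

Definition complete_prefix_code (ts : list word) : Prop :=
  forall x : cantor, exists! i, i < length ts /\ is_prefix (nth i ts []) x.

(* continuity for the product topology on {0,1}^N *)
Definition cont (f : cantor -> cantor) : Prop :=
  forall x n, exists m, forall y, (forall k, k < m -> y k = x k) ->
    forall k, k < n -> f y k = f x k.

Definition homeo (f : cantor -> cantor) : Prop :=
  cont f /\ exists g, cont g /\ (forall x, g (f x) = x) /\ (forall x, f (g x) = x).

Definition is_perm (n : nat) (s : nat -> nat) : Prop :=
  (forall i, i < n -> s i < n) /\
  (forall i j, i < n -> j < n -> s i = s j -> i = j).

Definition V_witness (v : cantor -> cantor) (ts ss : list word) (s : nat -> nat) : Prop :=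
  complete_prefix_code ts /\ complete_prefix_code ss /\
  length ts = length ss /\ is_perm (length ts) s /\
  forall i w, i < length ts -> v (catw (nth i ts []) w) = catw (nth (s i) ss []) w.

Definition inV (v : cantor -> cantor) : Prop :=
  homeo v /\ exists ts ss s, V_witness v ts ss s.

Definition inK (G : group) (om : G -> G -> G) (a : word -> G) : Prop :=
  forall u, a u = om (a (u ++ [false])) (a (u ++ [true])).

Definition pi_rel (G : group) (om : G -> G -> G) (v : cantor -> cantor)
    (a b : word -> G) : Prop :=
  @inK G om b /\ exists ts ss s, V_witness v ts ss s /\
    forall i u, i < length ts -> b (nth (s i) ss [] ++ u) = a (nth i ts [] ++ u).

Definition pi (G : group) (om : G -> G -> G) (v : cantor -> cantor) (a : word -> G)
  : word -> G :=
  epsilon (inhabits (fun _ => gone G)) (fun b => @pi_rel G om v a b).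

(* G(omega) = K(omega) x| V *)
Definition elG (G : group) := ((word -> G) * (cantor -> cantor))%type.

Definition inG (G : group) (om : G -> G -> G) (p : elG G) : Prop :=
  @inK G om (fst p) /\ inV (snd p).

(* (a,v)(b,w) = (a * v b v^-1, v w) = (a * pi(v)(b), v o w) *)
Definition mulG (G : group) (om : G -> G -> G) (p q : elG G) : elG G :=
  (fun u => gmul G (fst p u) (@pi G om (snd p) (fst q) u),
   fun x => snd p (snd q x)).

Definition G_isomorphic (G : group) (om1 om2 : G -> G -> G) : Prop :=
  exists phi : elG G -> elG G,
    (forall p, @inG G om1 p -> @inG G om2 (phi p)) /\
    (forall p q, @inG G om1 p -> @inG G om1 q -> phi p = phi q -> p = q) /\
    (forall r, @inG G om2 r -> exists p, @inG G om1 p /\ phi p = r) /\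
    (forall p q, @inG G om1 p -> @inG G om1 q -> phi (@mulG G om1 p q) = @mulG G om2 (phi p) (phi q)).

(* Main.v *)
Require Import Defs.
From Stdlib Require Import List Arith Lia FunctionalExtensionality ClassicalEpsilon FinFun Bool.
Import ListNotations.

Lemma catw_app p q x : catw (p ++ q) x = catw p (catw q x).
Proof.
  apply functional_extensionality; intro k. unfold catw.
  rewrite length_app.
  destruct (Nat.ltb_spec k (length p)).
  - destruct (Nat.ltb_spec k (length p + length q)); [|lia].
    apply app_nth1; auto.
  - destruct (Nat.ltb_spec (k - length p) (length q)).
    + destruct (Nat.ltb_spec k (length p + length q)); [|lia].
      apply app_nth2; auto.
    + destruct (Nat.ltb_spec k (length p + length q)); [lia|].
      f_equal; lia.
Qed.

Lemma catw_at_len p x : catw p x (length p) = x 0.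
Proof. unfold catw. destruct (Nat.ltb_spec (length p) (length p)); [lia|]. f_equal; lia. Qed.

Lemma catw_lt p x k : k < length p -> catw p x k = nth k p false.
Proof. intro H. unfold catw. destruct (Nat.ltb_spec k (length p)); [auto|lia]. Qed.

Lemma catw_inj_len p q : (forall x, catw p x = catw q x) -> length p < length q -> False.
Proof.
  intros H Hl.
  specialize (H (fun _ => negb (nth (length p) q false))).
  apply (f_equal (fun f => f (length p))) in H.
  rewrite catw_at_len, catw_lt in H by auto.
  destruct (nth (length p) q false); discriminate.
Qed.

Lemma catw_inj p q : (forall x, catw p x = catw q x) -> p = q.
Proof.
  intro H.
  assert (Hl : length p = length q).
  { destruct (lt_eq_lt_dec (length p) (length q)) as [[h|h]|h]; auto.
    - exfalso; eapply catw_inj_len; eauto.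
    - exfalso; eapply catw_inj_len; [|exact h]. intro x; symmetry; auto. }
  apply nth_ext with false false; auto.
  intros n Hn. specialize (H (fun _ => false)).
  apply (f_equal (fun f => f n)) in H.
  rewrite !catw_lt in H by lia. auto.
Qed.

Lemma prefix_catw t w : is_prefix t (catw t w).
Proof. intros k Hk. apply catw_lt; auto. Qed.

Lemma prefix_split t u z : is_prefix t (catw u z) -> length t <= length u ->
  u = t ++ skipn (length t) u.
Proof.
  intros H Hl. apply nth_ext with false false.
  - rewrite length_app, length_skipn. lia.
  - intros n Hn. destruct (Nat.lt_ge_cases n (length t)).
    + rewrite app_nth1 by auto. rewrite <- H by auto. rewrite catw_lt by lia. auto.
    + rewrite app_nth2 by auto. rewrite nth_skipn. f_equal. lia.
Qed.

Definition fl (u : word) : word := map negb u.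
Definition flc (x : cantor) : cantor := fun k => negb (x k).

Lemma fl_fl u : fl (fl u) = u.
Proof. unfold fl. rewrite map_map. erewrite map_ext; [apply map_id|]. apply negb_involutive. Qed.

Lemma fl_app u w : fl (u ++ w) = fl u ++ fl w.
Proof. apply map_app. Qed.

Lemma flc_flc x : flc (flc x) = x.
Proof. apply functional_extensionality; intro k; unfold flc; apply negb_involutive. Qed.

Lemma nth_fl k t : k < length t -> nth k (fl t) false = negb (nth k t false).
Proof.
  intro H. unfold fl. rewrite nth_indep with (d' := negb false) by (rewrite length_map; auto).
  apply map_nth.
Qed.

Lemma nth_map_fl i (ts : list word) : nth i (map fl ts) [] = fl (nth i ts []).
Proof. exact (map_nth fl ts [] i). Qed.

Lemma flc_catw t w : flc (catw t w) = catw (fl t) (flc w).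
Proof.
  apply functional_extensionality; intro k. unfold flc, catw.
  replace (length (fl t)) with (length t) by (unfold fl; rewrite length_map; auto).
  destruct (Nat.ltb_spec k (length t)); auto.
  rewrite nth_fl; auto.
Qed.

Lemma is_prefix_fl t x : is_prefix (fl t) x <-> is_prefix t (flc x).
Proof.
  unfold is_prefix, fl at 1. rewrite length_map. split; intros H k Hk; specialize (H k Hk).
  - unfold flc. rewrite H. fold (fl t). rewrite nth_fl by auto. apply negb_involutive.
  - fold (fl t). rewrite nth_fl by auto. unfold flc in H. rewrite <- H. symmetry; apply negb_involutive.
Qed.

Lemma cpc_fl ts : complete_prefix_code ts -> complete_prefix_code (map fl ts).
Proof.
  intros H x. destruct (H (flc x)) as [i [[Hi Hp] Hu]].
  exists i; split; [split|].
  - rewrite length_map; auto.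
  - rewrite nth_map_fl. apply (proj2 (is_prefix_fl _ _)); auto.
  - intros j [Hj Hpj]. apply Hu. rewrite length_map in Hj. rewrite nth_map_fl in Hpj.
    split; auto. apply (proj1 (is_prefix_fl _ _)); auto.
Qed.

Definition vf (v : cantor -> cantor) : cantor -> cantor := fun x => flc (v (flc x)).

Lemma V_witness_fl v ts ss s : V_witness v ts ss s -> V_witness (vf v) (map fl ts) (map fl ss) s.
Proof.
  intros [H1 [H2 [H3 [H4 H5]]]].
  split; [apply cpc_fl; auto|]. split; [apply cpc_fl; auto|].
  split; [rewrite !length_map; auto|]. split; [rewrite length_map; auto|].
  intros i w Hi. rewrite length_map in Hi. unfold vf. rewrite !nth_map_fl.
  rewrite flc_catw, fl_fl, H5 by auto. rewrite flc_catw, flc_flc. auto.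
Qed.

Lemma cont_fl v : cont v -> cont (vf v).
Proof.
  intros H x n. destruct (H (flc x) n) as [m Hm]. exists m.
  intros y Hy k Hk. unfold vf. unfold flc at 1 3. f_equal. apply Hm; auto.
  intros k' Hk'. unfold flc. rewrite Hy; auto.
Qed.

Lemma inV_fl v : inV v -> inV (vf v).
Proof.
  intros [[Hc [g [Hg [Hgv Hvg]]]] [ts [ss [s W]]]]. split.
  - split; [apply cont_fl; auto|]. exists (vf g). split; [apply cont_fl; auto|].
    split; intro x; unfold vf; rewrite flc_flc; [rewrite Hgv | rewrite Hvg]; apply flc_flc.
  - exists (map fl ts), (map fl ss), s. apply V_witness_fl; auto.
Qed.

Lemma inK_fl (G : group) (O : G -> G -> G) a :
  inK G O a -> inK G (fun g h => O h g) (fun u => a (fl u)).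
Proof.
  intros H u. rewrite (H (fl u)). rewrite !fl_app. reflexivity.
Qed.

Lemma pi_rel_fl (G : group) (O : G -> G -> G) v b c :
  pi_rel G O v b c -> pi_rel G (fun g h => O h g) (vf v) (fun u => b (fl u)) (fun u => c (fl u)).
Proof.
  intros [HK [ts [ss [s [W Hc]]]]]. split; [apply inK_fl; auto|].
  exists (map fl ts), (map fl ss), s. split; [apply V_witness_fl; auto|].
  intros i u Hi. rewrite length_map in Hi. rewrite !nth_map_fl, !fl_app, !fl_fl. auto.
Qed.

Definition maxlen (ss : list word) : nat := fold_right (fun w m => max (length w) m) 0 ss.

Lemma maxlen_ge ss i : i < length ss -> length (nth i ss []) <= maxlen ss.
Proof.
  revert i; induction ss as [|w ss IH]; intros i Hi; simpl in *; [lia|].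
  destruct i; [lia|]. specialize (IH i ltac:(lia)). lia.
Qed.

Lemma long_ext ss : complete_prefix_code ss -> forall u, maxlen ss <= length u ->
  exists j w, j < length ss /\ u = nth j ss [] ++ w.
Proof.
  intros H u Hu. destruct (H (catw u (fun _ => false))) as [j [[Hj Hp] _]].
  exists j, (skipn (length (nth j ss [])) u). split; auto.
  apply prefix_split with (fun _ => false); auto. eapply Nat.le_trans; [apply maxlen_ge; auto| exact Hu].
Qed.

Lemma perm_surj n s : is_perm n s -> forall j, j < n -> exists i, i < n /\ s i = j.
Proof.
  intros [H1 H2]. apply (proj1 (bInjective_bSurjective H1)). exact H2.
Qed.

Lemma eval_long (G : group) (b c : word -> G) v ts ss s :
  V_witness v ts ss s ->
  (forall i u, i < length ts -> c (nth (s i) ss [] ++ u) = b (nth i ts [] ++ u)) ->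
  forall u, maxlen ss <= length u ->
  exists i w, i < length ts /\ u = nth (s i) ss [] ++ w /\ c u = b (nth i ts [] ++ w).
Proof.
  intros [H1 [H2 [H3 [H4 H5]]]] Hc u Hu.
  destruct (long_ext ss H2 u Hu) as [j [w [Hj Hw]]].
  destruct (perm_surj _ _ H4 j ltac:(lia)) as [i [Hi Hs]].
  exists i, w. subst j. split; auto. split; auto. rewrite Hw. auto.
Qed.

Lemma K_agree (G : group) O (c1 c2 : word -> G) N :
  inK G O c1 -> inK G O c2 -> (forall u, N <= length u -> c1 u = c2 u) -> c1 = c2.
Proof.
  intros H1 H2 H. apply functional_extensionality; intro u.
  assert (forall k u, N <= length u + k -> c1 u = c2 u).
  { induction k; intros u' Hu'; [apply H; lia|].
    rewrite (H1 u'), (H2 u'). f_equal; apply IHk; rewrite length_app; simpl; lia. }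
  apply (H0 N). lia.
Qed.

Lemma pi_rel_unique (G : group) O v (b c1 c2 : word -> G) :
  (forall x y, v x = v y -> x = y) ->
  pi_rel G O v b c1 -> pi_rel G O v b c2 -> c1 = c2.
Proof.
  intros Hinj [K1 [ts [ss [s [W Hc]]]]] [K2 [ts' [ss' [s' [W' Hc']]]]].
  apply (K_agree G O c1 c2 (maxlen ss + maxlen ss')); auto.
  intros u Hu.
  destruct (eval_long G b c1 v ts ss s W Hc u ltac:(lia)) as [i [w [Hi [Hu1 E1]]]].
  destruct (eval_long G b c2 v ts' ss' s' W' Hc' u ltac:(lia)) as [i' [w' [Hi' [Hu2 E2]]]].
  rewrite E1, E2. f_equal. apply catw_inj. intro x. apply Hinj.
  destruct W as [_ [_ [_ [_ H5]]]]. destruct W' as [_ [_ [_ [_ H5']]]].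
  rewrite !catw_app, H5, H5' by auto. rewrite <- !catw_app, <- Hu1, <- Hu2. auto.
Qed.

Definition Rrel (G : group) (b : word -> G) (ts ss : list word) (s : nat -> nat) (u : word) (g : G) : Prop :=
  exists i w, i < length ts /\ u = nth (s i) ss [] ++ w /\ g = b (nth i ts [] ++ w).

Definition Ee (G : group) b ts ss s u : G :=
  epsilon (inhabits (gone G)) (Rrel G b ts ss s u).

Fixpoint Ff (G : group) (O : G -> G -> G) b ts ss s (n : nat) (u : word) : G :=
  match n with
  | 0 => Ee G b ts ss s u
  | S n => if excluded_middle_informative (exists g, Rrel G b ts ss s u g)
           then Ee G b ts ss s u
           else O (Ff G O b ts ss s n (u ++ [false])) (Ff G O b ts ss s n (u ++ [true]))
  end.

Lemma Rrel_fun (G : group) (b : word -> G) v ts ss s u g1 g2 :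
  V_witness v ts ss s -> Rrel G b ts ss s u g1 -> Rrel G b ts ss s u g2 -> g1 = g2.
Proof.
  intros [H1 [H2 [H3 [[H4a H4b] H5]]]] [i [w [Hi [Hu Hg]]]] [i' [w' [Hi' [Hu' Hg']]]].
  assert (s i = s i').
  { destruct (H2 (catw u (fun _ => false))) as [j [_ Hj]].
    transitivity j; [symmetry|]; apply Hj; split.
    - specialize (H4a i Hi); lia.
    - rewrite Hu, catw_app. apply prefix_catw.
    - specialize (H4a i' Hi'); lia.
    - rewrite Hu', catw_app. apply prefix_catw. }
  assert (i = i') by (apply H4b; auto). subst i'.
  rewrite Hu in Hu'. apply app_inv_head in Hu'. subst. auto.
Qed.

Lemma Ff_ext (G : group) O b v ts ss s n u g :
  V_witness v ts ss s -> Rrel G b ts ss s u g -> Ff G O b ts ss s n u = g.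
Proof.
  intros W HR.
  assert (HE : Rrel G b ts ss s u (Ee G b ts ss s u)) by (unfold Ee; apply epsilon_spec; eauto).
  destruct n; simpl.
  - eapply Rrel_fun; eauto.
  - destruct (excluded_middle_informative _) as [_|ne]; [eapply Rrel_fun; eauto|].
    exfalso; apply ne; eauto.
Qed.

Lemma R_long (G : group) (b : word -> G) v ts ss s u :
  V_witness v ts ss s -> maxlen ss <= length u -> exists g, Rrel G b ts ss s u g.
Proof.
  intros W Hu.
  destruct (eval_long G (fun _ => gone G) (fun _ => gone G) v ts ss s W (fun _ _ _ => eq_refl) u Hu) as [i [w [Hi [Hw _]]]].
  exists (b (nth i ts [] ++ w)), i, w. auto.
Qed.

Lemma Ff_stab (G : group) O b v ts ss s :
  V_witness v ts ss s ->
  forall n m u, maxlen ss <= n + length u -> maxlen ss <= m + length u ->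
  Ff G O b ts ss s n u = Ff G O b ts ss s m u.
Proof.
  intros W. induction n; intros m u Hn Hm; destruct m; simpl; auto.
  - destruct (excluded_middle_informative _) as [_|ne]; auto.
    exfalso; apply ne; eapply R_long; eauto; lia.
  - destruct (excluded_middle_informative _) as [_|ne]; auto.
    exfalso; apply ne; eapply R_long; eauto; lia.
  - destruct (excluded_middle_informative _) as [_|ne]; auto.
    f_equal; apply IHn; rewrite length_app; simpl; lia.
Qed.

Lemma pi_exists (G : group) O v (b : word -> G) :
  inK G O b -> inV v -> exists c, pi_rel G O v b c.
Proof.
  intros Hb [_ [ts [ss [s W]]]].
  set (N := maxlen ss).
  exists (fun u => Ff G O b ts ss s N u).
  assert (Hs : forall u, Ff G O b ts ss s N u = Ff G O b ts ss s (S N) u)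
    by (intro u; apply (Ff_stab G O b v ts ss s W); unfold N; lia).
  split; [|exists ts, ss, s; split; auto].
  - intro u. rewrite Hs. simpl.
    destruct (excluded_middle_informative _) as [e|_]; auto.
    assert (HE : Rrel G b ts ss s u (Ee G b ts ss s u)) by (unfold Ee; apply epsilon_spec; auto).
    destruct HE as [i [w [Hi [Hu Hg]]]]. rewrite Hg, (Hb (nth i ts [] ++ w)).
    f_equal; symmetry; apply (Ff_ext G O b v); auto; exists i; eexists;
      (split; [auto|split; [rewrite Hu, <- app_assoc; reflexivity| rewrite <- app_assoc; reflexivity]]).
  - intros i u Hi. apply (Ff_ext G O b v); auto. exists i, u. auto.
Qed.

Lemma pi_spec (G : group) O v (b : word -> G) :
  inK G O b -> inV v -> pi_rel G O v b (pi G O v b).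
Proof.
  intros Hb Hv. unfold pi. apply epsilon_spec. apply pi_exists; auto.
Qed.

Lemma inV_inj v : inV v -> forall x y, v x = v y -> x = y.
Proof.
  intros [[_ [g [_ [Hg _]]]] _] x y H. rewrite <- (Hg x), <- (Hg y), H. auto.
Qed.

Theorem mainTheorem17 (G : group) (om : G -> G -> G) (hom : is_morph2 G om) :
  G_isomorphic G (fun g h => om h g) om.
Proof.
  exists (fun p => (fun u => fst p (fl u), vf (snd p))).
  split; [|split; [|split]].
  - intros [a v] [Ha Hv]. split; simpl.
    + exact (inK_fl G (fun g h => om h g) a Ha).
    + apply inV_fl; auto.
  - intros [a v] [a' v'] _ _ Heq. simpl in Heq. injection Heq as H1 H2.
    f_equal; apply functional_extensionality; intro x.
    + apply (f_equal (fun f => f (fl x))) in H1. rewrite fl_fl in H1. auto.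
    + apply (f_equal (fun f => flc (f (flc x)))) in H2. unfold vf in H2.
      rewrite !flc_flc in H2. auto.
  - intros [a v] [Ha Hv]. simpl in *.
    exists (fun u => a (fl u), vf v). split.
    + split; simpl; [exact (inK_fl G om a Ha) | apply inV_fl; auto].
    + simpl. f_equal; apply functional_extensionality; intro x.
      * rewrite fl_fl; auto.
      * unfold vf. rewrite !flc_flc. auto.
  - intros [a v] [b w] [Ha Hv] [Hb Hw]. simpl in *. unfold mulG. simpl.
    f_equal; apply functional_extensionality; intro u.
    + f_equal.
      pose proof (pi_spec G (fun g h => om h g) v b Hb Hv) as h1.
      pose proof (pi_rel_fl G _ v b _ h1) as h2. simpl in h2.
      pose proof (pi_spec G om (vf v) (fun u => b (fl u))
                    (inK_fl G (fun g h => om h g) b Hb) (inV_fl v Hv)) as h3.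
      pose proof (pi_rel_unique G om (vf v) _ _ _ (inV_inj _ (inV_fl v Hv)) h2 h3) as E.
      apply (f_equal (fun f => f u)) in E. exact E.
    + unfold vf. rewrite flc_flc. auto.
Qed.
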